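(* Let $n,r,c$ be integers such that $r\geq 3$, $c\geq 1$, and $n\geq r(r-1)\big((r-1)(r-2)+1\big)c$. If $(r^2-r)$ divides $n$ and an affine plane of order $r$ exists, then there exists a graph $G$ on $n$ vertices with $\delta(G) = \left(1-\frac{r-2}{r^2-r}\right)n-c-1$ such that $\mathrm{mc}_r(G)\leq \frac{n}{r-1}-c$.
   Context: An affine plane of order $q$ is a $q$-uniform hypergraph on $q^2$ vertices (points) with $q(q+1)$ edges (lines) such that each pair of distinct points lies in exactly one line. $\delta(G)$ denotes the minimum degree of $G$. For a graph $G$ and a positive integer $r$, $\mathrm{mc}_r(G)$ is the largest integer $m$ such that in every coloring of the edges of $G$ with $r$ colors there is a monochromatic component (a maximal connected subgraph all of whose edges have one color) with at least $m$ vertices. *)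

(* Defs.v *)
From mathcomp Require Import all_boot.
Set Implicit Arguments. Unset Strict Implicit. Unset Printing Implicit Defensive.

Definition affine_plane_exists (q : nat) : Prop :=
  exists L : {set {set 'I_(q * q)}},
    [/\ #|L| = q * (q + 1),
        (forall l, l \in L -> #|l| = q) &
        (forall x y : 'I_(q * q), x != y ->
           exists! l, (l \in L) /\ (x \in l) /\ (y \in l))].

Definition simple_graph (n : nat) (e : rel 'I_n) : Prop :=
  symmetric e /\ irreflexive e.

(* minimum degree (for n >= 1 this is the true minimum, degrees being < n) *)
Definition mindeg (n : nat) (e : rel 'I_n) : nat :=
  \big[minn/n]_(x : 'I_n) #|[set y | e x y]|.

(* An r-colouring of the edges is given by a symmetric map on ordered pairs
   (its values on non-edges are irrelevant). *)
Definition edge_colouring_sym (n r : nat) (col : {ffun 'I_n * 'I_n -> 'I_r}) : bool :=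
  [forall u, forall v, col (u, v) == col (v, u)].

Definition mono_comp (n r : nat) (e : rel 'I_n) (col : {ffun 'I_n * 'I_n -> 'I_r})
  (i : 'I_r) (x : 'I_n) : {set 'I_n} :=
  [set y | connect (fun u v => e u v && (col (u, v) == i)) x y].

Definition forces_mono_comp (n r : nat) (e : rel 'I_n) (m : nat) : bool :=
  [forall col : {ffun 'I_n * 'I_n -> 'I_r},
     edge_colouring_sym col ==>
     [exists i : 'I_r, exists x : 'I_n, m <= #|mono_comp e col i x|]].

(* mc_r(G): the largest such m (all such m are <= n since components have
   at most n vertices, as soon as r >= 1). *)
Definition mc (n r : nat) (e : rel 'I_n) : nat :=
  \max_(m < n.+1 | forces_mono_comp r e m) m.

(* Main.v *)
Require Import Defs.
From mathcomp Require Import all_boot.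
From mathcomp Require Import zify.
Set Implicit Arguments. Unset Strict Implicit. Unset Printing Implicit Defensive.

Lemma card_tag_eq (X : finType) (w : X -> nat) (t : X) :
  #|[pred y : {x : X & 'I_(w x)} | tag y == t]| = w t.
Proof.
rewrite -(card_sig (tagged_with (fun x => 'I_(w x)) t)).
by rewrite -(bij_eq_card (tag_with_bij (fun x => 'I_(w x)) t)) card_ord.
Qed.

Lemma typ_exists (X : finType) (w : X -> nat) (n : nat) :
  \sum_x w x = n -> exists typ : 'I_n -> X,
    forall P : pred X, #|[set u | P (typ u)]| = \sum_(t | P t) w t.
Proof.
move=> Hs.
pose T := {x : X & 'I_(w x)}.
have cT : #|{: T}| = n.
  rewrite card_tagged sumnE big_map big_enum /= -Hs.
  by apply: eq_bigr => i _; rewrite card_ord.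
pose h (u : 'I_n) : T := enum_val (cast_ord (esym cT) u).
have hinj : injective h.
  move=> u v /enum_val_inj /(congr1 val) /= H; exact: val_inj.
have hsurj : forall y : T, exists u, h u = y.
  move=> y; exists (cast_ord cT (enum_rank y)).
  by rewrite /h cast_ordK enum_rankK.
exists (fun u => tag (h u)) => P.
have -> : #|[set u | P (tag (h u))]| = #|[set y : T | P (tag y)]|.
  rewrite -(card_imset _ hinj); apply: eq_card => y.
  rewrite [RHS]inE; apply/imsetP/idP.
    by case=> u; rewrite inE => Pu ->.
  by move=> Py; case: (hsurj y) => u hu; exists u => //; rewrite inE hu.
rewrite -sum1_card.
rewrite (partition_big (fun y : T => tag y) P) /=; last by move=> y; rewrite inE.
apply: eq_bigr => t Pt.
rewrite -(card_tag_eq w t) -sum1_card; apply: eq_bigl => y.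
rewrite !inE /=; case: eqP => [->|] ; by rewrite ?Pt ?andbF ?andbT.
Qed.

Definition share (X : finType) (Lab : eqType) r (lab : X -> 'I_r -> Lab) x y :=
  [exists i, lab x i == lab y i].

Lemma bigmin_le_seq (I : eqType) (s : seq I) (F : I -> nat) n0 x :
  x \in s -> \big[minn/n0]_(i <- s) F i <= F x.
Proof.
elim: s => // a s IH; rewrite big_cons in_cons => /orP [/eqP ->|Hx].
  exact: geq_minl.
exact: leq_trans (geq_minr _ _) (IH Hx).
Qed.

Lemma graph_from_types (X : finType) (Lab : eqType) (r n K D : nat)
  (lab : X -> 'I_r -> Lab) (w : X -> nat) :
  0 < r -> \sum_x w x = n ->
  (forall x i, \sum_(y | lab y i == lab x i) w y <= K) ->
  (forall x, 0 < w x -> \sum_(y | ~~ share lab x y) w y <= D) ->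
  (exists2 x0, 0 < w x0 & \sum_(y | ~~ share lab x0 y) w y = D) ->
  exists e : rel 'I_n, [/\ simple_graph e, mindeg e + D + 1 = n & mc r e <= K].
Proof.
move=> r0 Hs HK HD [x0 wx0 Hx0].
have [typ Htyp] := typ_exists Hs.
pose i0 : 'I_r := Ordinal r0.
have shrefl : forall x, share lab x x by move=> x; apply/existsP; exists i0.
have shsym : forall x y, share lab x y = share lab y x.
  by move=> x y; apply/existsP/existsP => -[i Hi]; exists i; rewrite eq_sym.
pose e : rel 'I_n := fun u v => (u != v) && share lab (typ u) (typ v).
have wpos : forall u, 0 < w (typ u).
  move=> u; have := Htyp (pred1 (typ u)); rewrite big_pred1_eq => <-.
  by apply/card_gt0P; exists u; rewrite inE /=.
have degE : forall u, #|[set v | e u v]| + 1 +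
                      \sum_(y | ~~ share lab (typ u) y) w y = n.
  move=> u; rewrite -(Htyp (fun y => ~~ share lab (typ u) y)).
  have -> : [set v | ~~ share lab (typ u) (typ v)] = ~: [set v | share lab (typ u) (typ v)].
    by apply/setP => v; rewrite !inE.
  have -> : #|[set v | e u v]| + 1 = #|[set v | share lab (typ u) (typ v)]|.
    have -> : [set v | share lab (typ u) (typ v)] = u |: [set v | e u v].
      apply/setP => v; rewrite !inE /e; case: (eqVneq v u) => [->|] /=.
        by rewrite shrefl.
      by [].
    by rewrite cardsU1 inE /e eqxx /= addnC.
  by rewrite cardsC card_ord.
exists e; split.
- split; first by move=> u v; rewrite /e eq_sym shsym.
  by move=> u; rewrite /e eqxx.
- have [u0 Hu0] : exists u0, typ u0 = x0.
    have := Htyp (pred1 x0); rewrite big_pred1_eq => Hc.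
    move: wx0; rewrite -Hc => /card_gt0P [u]; rewrite inE /= => /eqP <-.
    by exists u.
  have Hdeg0 := degE u0; rewrite Hu0 Hx0 in Hdeg0.
  suff Hm : mindeg e = #|[set v | e u0 v]| by rewrite Hm; lia.
  apply/eqP; rewrite eqn_leq; apply/andP; split.
    rewrite /mindeg; apply: bigmin_le_seq; exact: mem_index_enum.
  rewrite /mindeg; apply: (big_ind (fun m => #|[set v | e u0 v]| <= m)).
  + lia.
  + by move=> a b Ha Hb; rewrite leq_min Ha Hb.
  move=> u _.
  have := degE u; have := HD _ (wpos u); lia.
- pose col := [ffun p : 'I_n * 'I_n =>
                 odflt i0 [pick i | lab (typ p.1) i == lab (typ p.2) i]].
  have colsym : edge_colouring_sym col.
    apply/forallP => u; apply/forallP => v; rewrite !ffunE /=.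
    have -> : [pick i | lab (typ v) i == lab (typ u) i] =
              [pick i | lab (typ u) i == lab (typ v) i].
      by apply: eq_pick => i; rewrite /= eq_sym.
    by [].
  have edge_lab : forall i u v, e u v && (col (u, v) == i) ->
                   lab (typ u) i == lab (typ v) i.
    move=> i u v /andP [/andP [_ Hsh]]; rewrite ffunE /=.
    case: pickP => [j Hj /= /eqP <- //|Hn].
    by move: Hsh => /existsP [j]; rewrite Hn.
  have comp_lab : forall i x y, y \in mono_comp e col i x ->
                   lab (typ y) i == lab (typ x) i.
    move=> i x y; rewrite inE => /connectP [p Hp ->] {y}.
    elim: p x Hp => [|z p IH] x /=; first by rewrite eqxx.
    move=> /andP [Hxz Hp]; have := IH z Hp; move/eqP => ->.
    by rewrite eq_sym; exact: edge_lab Hxz.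
  rewrite /mc; apply/bigmax_leqP => m Hm.
  move: Hm => /forallP /(_ col) /implyP /(_ colsym) /existsP [i /existsP [x Hx]].
  apply: (leq_trans Hx); apply: leq_trans (HK (typ x) i).
  rewrite -(Htyp (fun y => lab y i == lab (typ x) i)).
  apply: subset_leq_card; apply/subsetP => y Hy; rewrite inE; exact: comp_lab Hy.
Qed.

Lemma sum_option (T : finType) (Q : pred (option T)) (F : option T -> nat) :
  \sum_(y | Q y) F y = (if Q None then F None else 0) + \sum_(p | Q (Some p)) F (Some p).
Proof.
rewrite big_mkcond (bigD1 None) //=; congr (_ + _).
rewrite (reindex_omap Some id) /=; last by case.
rewrite [RHS]big_mkcond; apply: eq_big => // p; by rewrite eqxx.
Qed.

Lemma card_sumb (T : finType) (A : {set T}) : #|A| = \sum_x (x \in A : nat).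
Proof. by rewrite -sum1_card big_mkcond /=; apply: eq_bigr => x _; case: (x \in A). Qed.

Lemma arith_total r N c K U : 3 <= r -> 1 <= c -> r*c <= N -> U + K = r*r -> U + 1 = r + r ->
  N - r*c + ((r-1)*c + (r-1)*c + (r-2)*(N-c) + K*N) = (r*r - r)*N.
Proof.
move=> h1 h2 h3 h4 h5.
have -> : K = (r-1)*(r-1) by nia.
have -> : r * r - r = r * (r - 1) by nia.
nia.
Qed.

Lemma natS1 (a b : nat) : a = 1 + b -> b = a - 1. Proof. lia. Qed.
Lemma natS2 (a b e : nat) : a = 1 + b -> b = 1 + e -> e = a - 2. Proof. lia. Qed.

Section Affine.
Variable r : nat.
Hypothesis r2 : 2 <= r.
Local Notation P := 'I_(r * r).
Variable L : {set {set P}}.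
Hypothesis Lsize : forall l, l \in L -> #|l| = r.
Hypothesis Luniq : forall x y : P, x != y -> exists! l, l \in L /\ x \in l /\ y \in l.

Definition ln (x y : P) : {set P} := odflt set0 [pick l in L | (x \in l) && (y \in l)].

Lemma lnP x y : x != y -> [/\ ln x y \in L, x \in ln x y & y \in ln x y].
Proof.
move=> xy; rewrite /ln; case: pickP => [l /andP [lL /andP [xl yl]] //|H].
have [l [[lL [xl yl]] _]] := Luniq xy.
by move: (H l); rewrite lL xl yl.
Qed.

Lemma ln_uniq x y l : x != y -> l \in L -> x \in l -> y \in l -> l = ln x y.
Proof.
move=> xy lL xl yl; have [lL' xl' yl'] := lnP xy.
have [m [_ Hm]] := Luniq xy.
by rewrite -(Hm l) ?(Hm (ln x y)).
Qed.

Lemma meet1 l m x y : l \in L -> m \in L -> l != m ->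
  x \in l -> x \in m -> y \in l -> y \in m -> x = y.
Proof.
move=> lL mL lm xl xm yl ym; apply/eqP; apply: contraNT lm => xy.
by rewrite (ln_uniq xy lL xl yl) (ln_uniq xy mL xm ym).
Qed.

Definition pencil p := [set l in L | p \in l].

Lemma pencil_card p : #|pencil p| = r.+1.
Proof.
have H1 : \sum_(l in pencil p) #|l :\ p| = #|pencil p| * (r - 1).
  rewrite -sum_nat_const; apply: eq_bigr => l; rewrite inE => /andP [lL pl].
  move: (cardsD1 p l); rewrite pl Lsize //; lia.
have H2 : \sum_(l in pencil p) #|l :\ p| = r * r - 1.
  under eq_bigr do rewrite card_sumb.
  rewrite exchange_big /=.
  rewrite (eq_bigr (fun q => (q != p : nat))).
    have -> : \sum_i (i != p : nat) = #|[set~ p]|.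
      by rewrite card_sumb; apply: eq_bigr => i _; rewrite !inE.
    by rewrite cardsC1 card_ord subn1.
  move=> q _; case: (eqVneq q p) => [->|qp].
    by rewrite big1 // => l _; rewrite !inE eqxx.
  have pq : p != q by rewrite eq_sym.
  have [lL pl ql] := lnP pq.
  rewrite (bigD1 (ln p q)); last by rewrite inE lL pl.
  rewrite big1 /=; first by rewrite !inE qp ql.
  move=> l /andP [/[!inE] /andP [l'L pl'] lne].
  rewrite qp /=; suff /negbTE -> : q \notin l by [].
  by apply: contra lne => ql'; apply/eqP; apply: ln_uniq.
have Hr : 0 < r - 1 by lia.
apply/eqP; rewrite -(eqn_pmul2r Hr) -H1 H2; apply/eqP; nia.
Qed.

Lemma not_disj (A B : {set P}) : ~~ [disjoint A & B] -> exists2 x, x \in A & x \in B.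
Proof. by rewrite -setI_eq0 => /set0Pn [x]; rewrite inE => /andP [] ; exists x. Qed.

Lemma disj_intro (A B : {set P}) : (forall x, x \in A -> x \in B -> False) -> [disjoint A & B].
Proof. by move=> H; apply/negPn/negP => /not_disj [x xA xB]; exact: H xA xB. Qed.

Lemma playfair l p : l \in L -> p \notin l ->
  exists m, [/\ m \in L, p \in m, [disjoint m & l] &
     forall m', m' \in L -> p \in m' -> [disjoint m' & l] -> m' = m].
Proof.
move=> lL pl.
have pxl : forall x, x \in l -> p != x.
  by move=> x xl; apply: contraNneq pl => ->.
pose I := [set ln p x | x in l].
have IS : I \subset pencil p.
  apply/subsetP => m /imsetP [x xl ->]; have [H1 H2 _] := lnP (pxl x xl).
  by rewrite inE H1 H2.
have cI : #|I| = r.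
  rewrite card_in_imset ?Lsize // => x y xl yl Hxy.
  have [H1 H2 H3] := lnP (pxl x xl); have [H1' H2' H3'] := lnP (pxl y yl).
  apply: (meet1 lL H1) => //; last by rewrite Hxy.
  by apply: contraNneq pl => ->.
have cD : #|pencil p :\: I| = 1.
  by rewrite cardsD (setIidPr IS) cI pencil_card; lia.
move/eqP/cards1P: cD => [m Hm].
have : m \in pencil p :\: I by rewrite Hm set11.
rewrite !inE => /andP [mI /andP [mL pm]].
have mdisj : [disjoint m & l].
  apply: disj_intro => x xm xl; move/negP: mI; apply.
  apply/imsetP; exists x => //; apply: ln_uniq => //; exact: pxl.
exists m; split => // m' m'L pm' dm'.
have : m' \in pencil p :\: I.
  rewrite !inE m'L pm' andbT andbT; apply/imsetP => -[x xl Hx].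
  have [_ _ H3] := lnP (pxl x xl); rewrite -Hx in H3.
  by rewrite (disjointFr dm' H3) in xl.
by rewrite Hm inE => /eqP.
Qed.

Definition para (m l : {set P}) := (m == l) || [disjoint m & l].

Definition par (l : {set P}) (p : P) : {set P} :=
  odflt set0 [pick m in L | (p \in m) && para m l].

Lemma para_uniq l p m1 m2 : l \in L -> m1 \in L -> m2 \in L ->
  p \in m1 -> p \in m2 -> para m1 l -> para m2 l -> m1 = m2.
Proof.
move=> lL m1L m2L pm1 pm2 /orP [/eqP e1 | d1] /orP [/eqP e2 | d2].
- by rewrite e1 e2.
- by subst m1; rewrite (disjointFr d2 pm2) in pm1.
- by subst m2; rewrite (disjointFr d1 pm1) in pm2.
have pl : p \notin l by rewrite (disjointFr d1 pm1).
have [m [_ _ _ Hu]] := playfair lL pl.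
by rewrite (Hu m1 m1L pm1 d1) (Hu m2 m2L pm2 d2).
Qed.

Lemma par_spec l p : l \in L -> [/\ par l p \in L, p \in par l p & para (par l p) l].
Proof.
move=> lL; rewrite /par; case: pickP => [m /andP [mL /andP [pm pml]] //|H].
case: (boolP (p \in l)) => pl.
  by move: (H l); rewrite lL pl /para eqxx.
have [m [mL pm dm _]] := playfair lL pl.
by move: (H m); rewrite mL pm /para dm orbT.
Qed.

Lemma par_eq l p m : l \in L -> m \in L -> p \in m -> para m l -> par l p = m.
Proof.
move=> lL mL pm pml; have [H1 H2 H3] := par_spec p lL.
exact: (para_uniq lL H1 mL H2 pm H3 pml).
Qed.

Lemma para_sym m l : para m l = para l m.
Proof. by rewrite /para eq_sym disjoint_sym. Qed.

Lemma para_refl m : para m m.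
Proof. by rewrite /para eqxx. Qed.

Lemma para_trans a b c : a \in L -> b \in L -> c \in L ->
  para a b -> para b c -> para a c.
Proof.
move=> aL bL cL ab bc; case: (boolP [disjoint a & c]) => [d|/not_disj [x xa xc]].
  by rewrite /para d orbT.
rewrite para_sym in bc.
by rewrite (para_uniq bL aL cL xa xc ab bc) para_refl.
Qed.

Lemma nonpara_meet a b : ~~ para a b -> exists2 x, x \in a & x \in b.
Proof. by rewrite /para negb_or => /andP [_ /not_disj]. Qed.



Hypothesis r3 : 3 <= r.

Lemma rr_gt0 : 0 < r * r. Proof. by rewrite muln_gt0; lia. Qed.
Definition d0 : P := Ordinal rr_gt0.

Lemma pencil_d0_ne : exists l, l \in pencil d0.
Proof. by apply/card_gt0P; rewrite pencil_card. Qed.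

Definition RR : {set P} := odflt set0 [pick l in pencil d0].

Lemma RR_in : RR \in pencil d0.
Proof.
rewrite /RR; case: pickP => [l -> //|H].
by case: pencil_d0_ne => l; rewrite H.
Qed.

Lemma RR_L : RR \in L. Proof. by move: RR_in; rewrite inE => /andP []. Qed.
Lemma d0_RR : d0 \in RR. Proof. by move: RR_in; rewrite inE => /andP []. Qed.

Definition SS := pencil d0 :\ RR.
Lemma SS_card : #|SS| = r.
Proof. by move: (cardsD1 RR (pencil d0)); rewrite RR_in pencil_card /= => -[] H; exact: esym H. Qed.

Definition sg (i : 'I_r) : {set P} := enum_val (cast_ord (esym SS_card) i).

Lemma sg_SS i : sg i \in SS. Proof. exact: enum_valP. Qed.
Lemma sg_L i : sg i \in L.
Proof. by move: (sg_SS i); rewrite !inE => /andP [_ /andP []]. Qed.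
Lemma d0_sg i : d0 \in sg i.
Proof. by move: (sg_SS i); rewrite !inE => /andP [_ /andP []]. Qed.
Lemma sg_RR i : sg i != RR.
Proof. by move: (sg_SS i); rewrite !inE => /andP []. Qed.
Lemma sg_inj : injective sg.
Proof. by move=> i j /enum_val_inj /cast_ord_inj. Qed.
Lemma sg_surj l : l \in L -> d0 \in l -> l != RR -> exists i, sg i = l.
Proof.
move=> lL dl lR; have lS : l \in SS by rewrite !inE lR lL dl.
exists (cast_ord SS_card (enum_rank_in lS l)).
by rewrite /sg cast_ordK enum_rankK_in.
Qed.

Lemma r_gt0 : 0 < r. Proof. lia. Qed.
Lemma r_gt1 : 1 < r. Proof. lia. Qed.
Definition i0 : 'I_r := Ordinal r_gt0.
Definition i1 : 'I_r := Ordinal r_gt1.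
Definition l0 := sg i0.

Lemma l0_RR : l0 != RR. Proof. exact: sg_RR. Qed.

Lemma RR_d_ne : exists q, q \in RR :\ d0.
Proof.
apply/card_gt0P; move: (cardsD1 d0 RR); rewrite d0_RR (Lsize RR_L) /= => H; move: r_gt1; rewrite {1}H add1n ltnS; exact: id.
Qed.

Definition q1 : P := odflt d0 [pick q in RR :\ d0].
Lemma q1_in : q1 \in RR :\ d0.
Proof.
rewrite /q1; case: pickP => [q -> //|H].
by case: RR_d_ne => q; rewrite H.
Qed.
Lemma q1_RR : q1 \in RR. Proof. by move: q1_in; rewrite !inE => /andP []. Qed.
Lemma q1_d0 : q1 != d0. Proof. by move: q1_in; rewrite !inE => /andP []. Qed.

Lemma RR_l0_meet x : x \in RR -> x \in l0 -> x = d0.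
Proof.
move=> xR xl; apply: (meet1 RR_L (sg_L i0)) => //; last exact: d0_sg.
  by rewrite eq_sym l0_RR.
exact: d0_RR.
Qed.

Lemma q1_l0 : q1 \notin l0.
Proof. by apply/negP => /(RR_l0_meet q1_RR) /eqP; rewrite (negbTE q1_d0). Qed.

Lemma para_same a b x : a \in L -> b \in L -> x \in a -> x \in b -> para a b -> a = b.
Proof. move=> aL bL xa xb ab; exact: (para_uniq bL aL bL xa xb ab (para_refl b)). Qed.

Lemma RR_l0_np : ~~ para RR l0.
Proof.
apply/negP => H; move: l0_RR; rewrite /l0 (para_same (sg_L i0) RR_L (d0_sg i0) d0_RR) ?eqxx //.
by rewrite para_sym.
Qed.

Definition M1 := par l0 q1.


Variables N c : nat.
Hypothesis c1 : 1 <= c.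
Hypothesis Nrc : r * c <= N.

Definition w (p : P) : nat :=
  if p == d0 then (r - 1) * c else if p \in l0 then 0
  else if p == q1 then (r - 1) * c else if p \in RR then N - c else N.
Definition wB := N - r * c.
Definition wX (y : option P) : nat := if y is Some p then w p else wB.
Definition lab (y : option P) (i : 'I_r) : {set P} :=
  if y is Some p then par (sg i) p else if i == i0 then M1 else sg i.

Lemma rc1 : (r - 1) * c <= N - c. Proof. nia. Qed.
Lemma rcB : wB + (r - 1) * c = N - c. Proof. rewrite /wB; nia. Qed.

Lemma w_le p : w p <= N.
Proof. rewrite /w; have := rc1; repeat case: ifP => _; lia. Qed.
Lemma w_d : w d0 = (r - 1) * c. Proof. by rewrite /w eqxx. Qed.
Lemma w_q1 : w q1 = (r - 1) * c.
Proof. by rewrite /w (negbTE q1_d0) (negbTE q1_l0) eqxx. Qed.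
Lemma w_l0 p : p \in l0 -> p != d0 -> w p = 0.
Proof. by move=> pl pd; rewrite /w (negbTE pd) pl. Qed.
Lemma w_R p : p \in RR -> p != d0 -> w p <= N - c.
Proof.
move=> pR pd; have pl : p \notin l0.
  by apply/negP => /(RR_l0_meet pR) /eqP; rewrite (negbTE pd).
rewrite /w (negbTE pd) (negbTE pl) pR; case: ifP => _ //; exact: rc1.
Qed.
Lemma w_R2 p : p \in RR -> p != d0 -> p != q1 -> w p = N - c.
Proof.
move=> pR pd pq; have pl : p \notin l0.
  by apply/negP => /(RR_l0_meet pR) /eqP; rewrite (negbTE pd).
by rewrite /w (negbTE pd) (negbTE pl) (negbTE pq) pR.
Qed.
Lemma w_gen p : p \notin RR -> p \notin l0 -> w p = N.
Proof.
move=> pR pl; have pd : p != d0 by apply: contraNneq pR => ->; exact: d0_RR.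
have pq : p != q1 by apply: contraNneq pR => ->; exact: q1_RR.
by rewrite /w (negbTE pd) (negbTE pl) (negbTE pq) (negbTE pR).
Qed.

Lemma lab_L x i : lab x i \in L.
Proof.
case: x => [p|] /=; first by have [] := par_spec p (sg_L i).
case: ifP => _; last exact: sg_L.
by have [] := par_spec q1 (sg_L i0).
Qed.

Lemma lab_para x i : para (lab x i) (sg i).
Proof.
case: x => [p|] /=; first by have [] := par_spec p (sg_L i).
case: ifP => [/eqP -> | _]; last exact: para_refl.
by have [] := par_spec q1 (sg_L i0).
Qed.

Lemma labS_eq i p m : m \in L -> para m (sg i) -> (lab (Some p) i == m) = (p \in m).
Proof.
move=> mL mp /=; apply/eqP/idP => [<-|pm]; first by have [] := par_spec p (sg_L i).
exact: par_eq (sg_L i) mL pm mp.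
Qed.

Lemma sum_const_le (A : {set P}) K : (forall p, p \in A -> w p <= K) ->
  \sum_(p in A) w p <= #|A| * K.
Proof. by move=> H; rewrite -sum_nat_const; apply: leq_sum. Qed.

Lemma linesum m z : m \in L -> z \in m -> \sum_(p in m) w p <= w z + (r - 1) * N.
Proof.
move=> mL zm; rewrite (bigD1 z) //= leq_add2l.
have -> : \sum_(i in m | i != z) w i = \sum_(i in m :\ z) w i.
  by apply: eq_bigl => i; rewrite !inE andbC.
have cm : #|m :\ z| = r - 1.
  by apply: natS1; move: (cardsD1 z m); rewrite zm (Lsize mL).
rewrite -cm; apply: sum_const_le => p _; exact: w_le.
Qed.

Lemma linesum2 m z p : m \in L -> z \in m -> p \in m -> z != p ->
  \sum_(p' in m :\ p) w p' <= w z + (r - 2) * N.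
Proof.
move=> mL zm pm zp; have zmp : z \in m :\ p by rewrite !inE zp zm.
rewrite (bigD1 z) //= leq_add2l.
have -> : \sum_(i in m :\ p | i != z) w i = \sum_(i in m :\ p :\ z) w i.
  apply: eq_bigl => i; rewrite !inE.
  by case: (i != z); case: (i != p); case: (i \in m).
have cm : #|m :\ p :\ z| = r - 2.
  apply: (natS2 (b := #|m :\ p|)).
    by move: (cardsD1 p m); rewrite pm (Lsize mL).
  by move: (cardsD1 z (m :\ p)); rewrite zmp.
rewrite -cm; apply: sum_const_le => q _; exact: w_le.
Qed.


Lemma H1z m i : m \in L -> para m (sg i) ->
  exists2 z, z \in m & (if lab None i == m then wB else 0) + w z <= N - c.
Proof.
move=> mL mp.
have Ble : (if lab None i == m then wB else 0) <= wB by case: ifP.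
have := rcB; have := rc1 => H1 H2.
case: (boolP (d0 \in m)) => dm.
  by exists d0 => //; rewrite w_d; lia.
case: (eqVneq i i0) => [ei | ii0].
  subst i.
  case: (eqVneq m M1) => [mM | mM].
    exists q1; first by rewrite mM /M1; have [] := par_spec q1 (sg_L i0).
    rewrite w_q1; lia.
  have mR : ~~ para m RR.
    apply/negP => mR; move: RR_l0_np; rewrite para_sym.
    by rewrite (para_trans (sg_L i0) mL RR_L _ mR) // para_sym.
  have [z zm zR] := nonpara_meet mR.
  exists z => //; rewrite add0n; apply: w_R => //.
  by apply: contraNneq dm => <-.
have -> : (lab None i == m) = false.
  rewrite /= (negbTE ii0); apply/negbTE; apply: contraNneq dm => <-; exact: d0_sg.
have ml : ~~ para m l0.
  apply/negP => ml; move/eqP: ii0; apply.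
  apply: sg_inj; apply: (para_same (sg_L i) (sg_L i0) (d0_sg i) (d0_sg i0)).
  by rewrite (para_trans (sg_L i) mL (sg_L i0) _ ml) // para_sym.
have [z zm zl] := nonpara_meet ml.
exists z => //; rewrite add0n w_l0 //.
by apply: contraNneq dm => <-.
Qed.

Lemma H1 x i : \sum_(y | lab y i == lab x i) wX y <= r * N - c.
Proof.
rewrite sum_option.
have mL := lab_L x i; have mp := lab_para x i.
rewrite (eq_bigl (fun p => p \in lab x i)); last by move=> p; rewrite labS_eq.
have [z zm Hz] := H1z mL mp.
have := linesum mL zm => Hs.
have : (if lab None i == lab x i then wX None else 0) + \sum_(p in lab x i) w p
         <= N - c + (r - 1) * N.
  move: Hz Hs; case: (lab None i == lab x i) => /= Hz Hs; lia.
have : N - c + (r - 1) * N = r * N - c by nia.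
move=> E1 E2; rewrite -E1; exact: E2.
Qed.


Lemma sum_D1 (A : {set P}) a : a \in A ->
  \sum_(p in A) w p = w a + \sum_(p in A :\ a) w p.
Proof.
move=> aA; rewrite (bigD1 a) //=; congr (_ + _); apply: eq_bigl => p.
by rewrite !inE andbC.
Qed.

Lemma card_R2 : #|RR :\ d0 :\ q1| = r - 2.
Proof.
apply: (natS2 (b := #|RR :\ d0|)).
  by move: (cardsD1 d0 RR); rewrite d0_RR (Lsize RR_L).
by move: (cardsD1 q1 (RR :\ d0)); rewrite q1_in.
Qed.

Lemma sum_R2 : \sum_(p in RR :\ d0 :\ q1) w p = (r - 2) * (N - c).
Proof.
rewrite -card_R2 -sum_nat_const; apply: eq_bigr => p; rewrite !inE.
by move=> /and3P [pq pd pR]; apply: w_R2.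
Qed.

Definition SR := (r - 1) * c + (r - 1) * c + (r - 2) * (N - c).
Definition DD := (r - 2) * N + c.

Lemma sum_R : \sum_(p in RR) w p = SR.
Proof.
rewrite (sum_D1 d0_RR) (sum_D1 q1_in) sum_R2 w_d w_q1 /SR; lia.
Qed.

Lemma sum_Rp p : p \in RR -> \sum_(p' in RR :\ p) w p' = SR - w p.
Proof. by move=> pR; rewrite -sum_R (sum_D1 pR) addKn. Qed.

Lemma SR_d : SR - (r - 1) * c = DD. Proof. rewrite /SR /DD; nia. Qed.
Lemma SR_o : SR - (N - c) + wB = DD. Proof. rewrite /SR /DD /wB; nia. Qed.

Lemma sum_sub (Q : pred P) (A : {set P}) :
  (forall p, Q p -> w p = 0 \/ p \in A) ->
  \sum_(p | Q p) w p <= \sum_(p in A) w p.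
Proof.
move=> H; rewrite (bigID (fun p => p \in A)) /= [X in _ + X]big1 ?addn0; last first.
  by move=> p /andP [Qp pA]; case: (H p Qp) => // pA'; rewrite pA' in pA.
rewrite big_mkcond [X in _ <= X]big_mkcond /=; apply: leq_sum => p _.
by case: (Q p); case: (p \in A).
Qed.

Lemma share_refl x : share lab x x.
Proof. by apply/existsP; exists i0. Qed.

Lemma share_sym x y : share lab x y = share lab y x.
Proof. by apply/existsP/existsP => -[i Hi]; exists i; rewrite eq_sym. Qed.

Lemma i1_i0 : i1 != i0. Proof. by []. Qed.

Lemma par_sg_d i : par (sg i) d0 = sg i.
Proof. exact: par_eq (sg_L i) (sg_L i) (d0_sg i) (para_refl _). Qed.

Lemma par_sg_in i p : p \in sg i -> par (sg i) p = sg i.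
Proof. move=> pi; exact: par_eq (sg_L i) (sg_L i) pi (para_refl _). Qed.

Lemma share_None_d : share lab None (Some d0).
Proof.
apply/existsP; exists i1; rewrite /= ?(negbTE i1_i0) par_sg_d //.
Qed.

Lemma share_None_q1 : share lab None (Some q1).
Proof. by apply/existsP; exists i0; rewrite /= eqxx. Qed.

Lemma share_None_sg p i : i != i0 -> p \in sg i -> share lab None (Some p).
Proof.
move=> ii pi; apply/existsP; exists i; rewrite /= (negbTE ii) par_sg_in //.
Qed.

Lemma NB p p' : ~~ share lab (Some p) (Some p') -> p' \in par RR p /\ p' != p.
Proof.
move=> H; have Hne : p' != p.
  by apply: contraNneq H => ->; exact: share_refl.
split => //; have pp : p != p' by rewrite eq_sym.
have [kL pk p'k] := lnP pp.
have [k'L dk' k'k] := par_spec d0 kL.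
case: (eqVneq (par (ln p p') d0) RR) => [kR | kR].
  rewrite kR para_sym in k'k.
  by rewrite (par_eq RR_L kL pk k'k).
have [i Hi] := sg_surj k'L dk' kR.
rewrite -Hi para_sym in k'k.
move/negP: H; case; apply/existsP; exists i => /=.
by rewrite (par_eq (sg_L i) kL pk k'k) (par_eq (sg_L i) kL p'k k'k).
Qed.

Lemma par_RR_R p : p \in RR -> par RR p = RR.
Proof. move=> pR; exact: par_eq RR_L RR_L pR (para_refl _). Qed.

Lemma NB_d p : ~~ share lab (Some d0) (Some p) = (p \in RR :\ d0).
Proof.
apply/idP/idP.
  move=> /NB [pR pd]; rewrite par_RR_R ?d0_RR // in pR.
  by rewrite !inE pd pR.
rewrite !inE => /andP [pd pR]; apply/negP => /existsP [i /eqP Hi].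
move: Hi; rewrite /= par_sg_d => Hi.
have pi : p \in sg i by rewrite Hi; have [] := par_spec p (sg_L i).
move/negP: pd; apply; apply/eqP.
apply: (meet1 (sg_L i) RR_L (sg_RR i)) => //; [exact: d0_sg | exact: d0_RR].
Qed.

Lemma H3 : \sum_(y | ~~ share lab (Some d0) y) wX y = DD.
Proof.
rewrite sum_option share_sym share_None_d /= add0n.
rewrite (eq_bigl (fun p => p \in RR :\ d0)); last by move=> p; rewrite NB_d.
by rewrite sum_Rp ?d0_RR // w_d SR_d.
Qed.


Lemma H2 x : 0 < wX x -> \sum_(y | ~~ share lab x y) wX y <= DD.
Proof.
case: x => [p|] /= wp; last first.
  rewrite sum_option share_refl /= add0n.
  apply: leq_trans (sum_sub (A := RR :\ d0 :\ q1) _) _; last first.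
    rewrite sum_R2 /DD; apply: leq_trans (leq_addr c _); apply: leq_mul => //; exact: leq_subr.
  move=> p H.
  case: (eqVneq p d0) => [e|pd]; first by subst p; rewrite share_None_d in H.
  case: (eqVneq p q1) => [e|pq]; first by subst p; rewrite share_None_q1 in H.
  case: (boolP (p \in RR)) => pR; first by right; rewrite !inE pq pd pR.
  left; have dp : d0 != p by rewrite eq_sym.
  have [kL dk pk] := lnP dp.
  have kR : ln d0 p != RR by apply: contraNneq pR => <-.
  have [i Hi] := sg_surj kL dk kR.
  case: (eqVneq i i0) => [ei|ii].
    by subst i; apply: w_l0 => //; rewrite /l0 Hi.
  by rewrite (share_None_sg ii (_ : p \in sg i)) ?Hi in H.
rewrite sum_option.
have -> : \sum_(p0 | ~~ share lab (Some p) (Some p0)) wX (Some p0) =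
          \sum_(p0 | ~~ share lab (Some p) (Some p0)) w p0 by [].
have Hsub : \sum_(p' | ~~ share lab (Some p) (Some p')) w p' <= \sum_(p' in par RR p :\ p) w p'.
  apply: sum_sub => p' H; right; have [H1 H2] := NB H.
  by rewrite !inE H1 H2.
case: (boolP (p \in RR)) => pR.
  rewrite par_RR_R // sum_Rp // in Hsub.
  case: (eqVneq p d0) => [e|pd].
    subst p; rewrite share_sym share_None_d /= add0n; rewrite w_d SR_d in Hsub; exact: Hsub.
  case: (eqVneq p q1) => [e|pq].
    subst p; rewrite share_sym share_None_q1 /= add0n; rewrite w_q1 SR_d in Hsub; exact: Hsub.
  rewrite w_R2 // in Hsub.
  have := SR_o; have : (if ~~ share lab (Some p) None then wX None else 0) <= wB.
    by case: ifP.
  move=> Ha Hb; apply: leq_trans (leq_add Ha Hsub) _; by rewrite addnC Hb.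
have pd : p != d0 by apply: contraNneq pR => ->; exact: d0_RR.
have pl : p \notin l0.
  by apply/negP => pl; move: wp; rewrite w_l0.
have dp : d0 != p by rewrite eq_sym.
have [kL dk pk] := lnP dp.
have kR : ln d0 p != RR by apply: contraNneq pR => <-.
have [i Hi] := sg_surj kL dk kR.
have ii : i != i0 by apply: contraNneq pl => ei; rewrite /l0 -ei Hi.
rewrite share_sym (share_None_sg ii (_ : p \in sg i)) ?Hi //= add0n.
have [mL pm mR] := par_spec p RR_L.
have ml : ~~ para (par RR p) l0.
  apply/negP => ml; move/negP: RR_l0_np; apply.
  by apply: (para_trans RR_L mL (sg_L i0)) => //; rewrite para_sym.
have [z zm zl] := nonpara_meet ml.
have zp : z != p by apply: contraNneq pl => <-.
have zd : z != d0.
  apply: contraNneq pR => ezd; subst z.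
  by rewrite -(para_same mL RR_L zm d0_RR mR).
have := linesum2 mL zm pm zp; rewrite w_l0 // add0n => H.
apply: leq_trans Hsub _; apply: leq_trans H _; rewrite /DD; exact: leq_addr.
Qed.

Lemma RR_l0_I : RR :&: l0 = [set d0].
Proof.
apply/setP => x; rewrite !inE; apply/andP/eqP => [[xR xl]|->].
  exact: RR_l0_meet.
split; [exact: d0_RR | exact: d0_sg].
Qed.

Lemma total n : n = (r * r - r) * N -> \sum_y wX y = n.
Proof.
move=> ->; rewrite sum_option /=.
have A : \sum_(p | p \in RR) w p = SR by exact: sum_R.
have B : \sum_(p | p \notin RR) w p = #|~: (RR :|: l0)| * N.
  rewrite (bigID (fun p => p \in l0)) /= big1 ?add0n; last first.
    move=> p /andP [pR pl]; apply: w_l0 => //.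
    by apply: contraNneq pR => ->; exact: d0_RR.
  rewrite -sum_nat_const; apply: eq_big => [p|p]; first by rewrite !inE negb_or.
  by move=> /andP [pR pl]; apply: w_gen.
rewrite (bigID (fun p => p \in RR)) /= A B.
have H1 := cardsC (RR :|: l0); rewrite card_ord in H1.
have H2 := cardsUI RR l0; rewrite RR_l0_I cards1 (Lsize RR_L) (Lsize (sg_L i0)) in H2.
rewrite /wB /SR; exact: arith_total r3 c1 Nrc H1 H2.
Qed.

Lemma constr n : n = (r * r - r) * N ->
  exists e : rel 'I_n, [/\ simple_graph e, mindeg e + DD + 1 = n & mc r e <= r * N - c].
Proof.
move=> En; apply: (graph_from_types (lab := lab) (w := wX)).
- exact: r_gt0.
- exact: total.
- exact: H1.
- exact: H2.
exists (Some d0); last exact: H3.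
rewrite /= w_d muln_gt0 c1 andbT subn_gt0; exact: r_gt1.
Qed.

End Affine.

Lemma arith_N r c N : 3 <= r ->
  r * (r - 1) * ((r - 1) * (r - 2) + 1) * c <= (r * r - r) * N -> r * c <= N.
Proof.
move=> r3 H.
have pos : 0 < r * r - r by nia.
have H' : ((r - 1) * (r - 2) + 1) * c <= N.
  rewrite -(leq_pmul2l pos); apply: leq_trans H; rewrite (_ : r * r - r = r * (r - 1)); last by nia.
  by rewrite !mulnA.
apply: leq_trans H'; apply: leq_mul => //; nia.
Qed.

Unset Implicit Arguments.

Theorem theorem3p2 (n r c : nat) :
  3 <= r -> 1 <= c ->
  r * (r - 1) * ((r - 1) * (r - 2) + 1) * c <= n ->
  (r * r - r) %| n ->
  affine_plane_exists r ->
  exists e : rel 'I_n,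
    [/\ simple_graph e,
        (* delta(G) = (1 - (r-2)/(r^2-r)) n - c - 1 *)
        mindeg e + c + 1 + (r - 2) * (n %/ (r * r - r)) = n &
        (* mc_r(G) <= n/(r-1) - c *)
        mc r e + c <= n %/ (r - 1)].
Proof.
move=> r3 c1 Hn Hdiv [L [_ Lsize Luniq]].
have r2 : 2 <= r by lia.
have En : n = (r * r - r) * (n %/ (r * r - r)) by rewrite mulnC divnK.
move: Hn Hdiv En; set N := n %/ (r * r - r) => Hn Hdiv En.
have Nrc : r * c <= N by apply: arith_N r3 _; rewrite -En.
have [e [He1 He2 He3]] := constr r2 Lsize Luniq r3 c1 Nrc En.
exists e; split => //.
  move: He2; rewrite /DD; lia.
have -> : n %/ (r - 1) = r * N.
  rewrite En (_ : (r * r - r) * N = r * N * (r - 1)); last by nia.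
  by rewrite mulnK //; lia.
have : c <= N by nia.
move: He3; lia.
Qed.
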